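(* Let $d$ be an odd positive integer. Regular 3-designs of size $n$ on $S^d$ exist when (i) $n$ is even and $n \ge 2d+2$; (ii) $n$ is odd and $n \ge 3d+2$; and (iii) $n$ is odd and $n \ge \frac{p}{p+1}(3d+3)$, where $p$ is a divisor of $n$ which is congruent to $5 \bmod 6$. In particular, there are regular 3-designs of size $n$ on $S^d$ when $n$ is an odd integer divisible by 5 with $n \ge 5(d+1)/2$.
   Context: For positive integers $n$ and $m$, $s(m) = \big(\sin(\tfrac{2\pi}{n}km)\big)_{k=1}^n$, $c(m) = \big(\cos(\tfrac{2\pi}{n}km)\big)_{k=1}^n$. A set $S$ of integers is a Sidon-type set of strength $t$ in $\mathbb{Z}_n$ if no non-trivial sum $\varepsilon_1x_1+\cdots+\varepsilon_tx_t$ with $\varepsilon_i\in\{0,\pm1\}$, $x_i \in S$ (not necessarily distinct) is $\equiv 0 \bmod n$; non-trivial means some $\varepsilon_i\ne0$ and no element appears with both coefficients $+1$ and $-1$. For $d$ odd and $e=(d+1)/2$, a regular 3-design of size $n$ on $S^d$ is the collection of the $n$ column vectors of $\sqrt{2/(d+1)}\,A(S)$, where $S=\{m_1,\dots,m_e\}$ is a set of $e$ integers forming a Sidon-type set of strength 3 in $\mathbb{Z}_n$, and $A(S)$ is the $2e\times n$ matrix with rows $s(m_1),c(m_1),\dots,s(m_e),c(m_e)$. *)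

(* Defs.v *)
From mathcomp Require Import all_boot all_order all_algebra.
From mathcomp Require Import all_classical all_reals all_analysis.
Set Implicit Arguments. Unset Strict Implicit. Unset Printing Implicit Defensive.
Import Order.TTheory GRing.Theory Num.Theory.
Local Open Scope ring_scope.

Definition sidon3 (n : nat) (S : seq int) : Prop :=
  forall (x : 'I_3 -> int) (eps : 'I_3 -> int),
    (forall i, x i \in S) ->
    (forall i, eps i \in [:: -1; 0; 1]) ->
    (exists i, eps i != 0) ->
    (forall i j, x i = x j -> ~ (eps i = 1 /\ eps j = -1)) ->
    ~ (n%:Z %| \sum_(i < 3) eps i * x i)%Z.

(* A(S): rows s(m_1), c(m_1), ..., s(m_e), c(m_e); rows indexed 0..d,
   row 2j is s(m_{j+1}), row 2j+1 is c(m_{j+1}); column j corresponds to k = j+1. *)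
Definition Amat (R : realType) (n d : nat) (S : seq int) : 'M[R]_(d.+1, n) :=
  \matrix_(i < d.+1, j < n)
    (let t := 2 * pi * (j.+1)%:R * (S`_(i./2))%:~R / n%:R in
     if odd i then cos t else sin t).

(* X is a regular 3-design of size n on S^d (its n columns are the points). *)
Definition regular_3design (R : realType) (n d : nat) (X : 'M[R]_(d.+1, n)) : Prop :=
  exists S : seq int,
    [/\ uniq S, size S = (d.+1)./2, sidon3 n S &
        X = Num.sqrt (2 / (d.+1)%:R) *: Amat R n d S].

(* Main.v *)
Require Import Defs.
From mathcomp Require Import all_boot all_order all_algebra.
From mathcomp Require Import all_classical all_reals all_analysis.
From mathcomp Require Import zify ring.
Import Order.TTheory GRing.Theory Num.Theory.
Local Open Scope ring_scope.
Lemma zdv0 (n s : int) : 0 < n -> (n %| s)%Z -> -n < s < n -> s = 0.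
Proof. move=> n0 /dvdzP [m ->] /andP[h1 h2].
have [hm|hm|->] := ltrgtP m 0; last by rewrite mul0r.
  have : 0 <= (- m - 1) * n by apply: mulr_ge0; lia.
  lia.
have : 0 <= (m - 1) * n by apply: mulr_ge0; lia.
lia.
Qed.

Definition epsok (e : int) := e = -1 \/ e = 0 \/ e = 1.
Definition signok (x0 x1 x2 e0 e1 e2 : int) :=
  (x0 = x1 -> ~ (e0 = 1 /\ e1 = -1)) /\ (x1 = x0 -> ~ (e1 = 1 /\ e0 = -1)) /\
      (x0 = x2 -> ~ (e0 = 1 /\ e2 = -1)) /\ (x2 = x0 -> ~ (e2 = 1 /\ e0 = -1)) /\
      (x1 = x2 -> ~ (e1 = 1 /\ e2 = -1)) /\ (x2 = x1 -> ~ (e2 = 1 /\ e1 = -1)).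

Definition PA (n p k x : int) := 0 <= x < n /\ exists q r, x = q * p + r /\ k + 1 <= r <= 2 * k + 1.

Lemma keyA (n p k x0 x1 x2 e0 e1 e2 : int) : 0 <= k -> 6 * k + 4 <= p -> (p %| n)%Z ->
  PA n p k x0 -> PA n p k x1 -> PA n p k x2 ->
  epsok e0 -> epsok e1 -> epsok e2 -> ~ (e0 = 0 /\ e1 = 0 /\ e2 = 0) ->
  signok x0 x1 x2 e0 e1 e2 -> ~ (n %| e0 * x0 + e1 * x1 + e2 * x2)%Z.
Proof.
move=> k0 kp /dvdzP [c hc] [x0b [q0 [r0 [hx0 hr0]]]] [x1b [q1 [r1 [hx1 hr1]]]]
  [x2b [q2 [r2 [hx2 hr2]]]] he0 he1 he2 hnz [s1 [s2 [s3 [s4 [s5 s6]]]]] hdiv.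
have p0 : 0 < p by clear -k0 kp; lia.
have n0 : 0 < n by clear -x0b; lia.
have hR : e0 * r0 + e1 * r1 + e2 * r2 = 0.
  apply: (@zdv0 p _ p0).
    move/dvdzP: hdiv => [m hm]; apply/dvdzP; exists (m * c - (e0 * q0 + e1 * q1 + e2 * q2)).
    rewrite mulrBl -mulrA -hc -hm hx0 hx1 hx2. ring.
  clear -he0 he1 he2 hr0 hr1 hr2 kp k0.
  Time case: he0 => [->|[->|->]]; case: he1 => [->|[->|->]]; case: he2 => [->|[->|->]]; lia.
clear hx0 hx1 hx2 hc.
case: he0 => [?|[?|?]]; subst e0; case: he1 => [?|[?|?]]; subst e1; case: he2 => [?|[?|?]]; subst e2;
  first [ (clear -hR hr0 hr1 hr2 k0 hnz; lia)
        | have hs := @zdv0 n _ n0 hdiv ltac:(clear -x0b x1b x2b; lia);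
          first [exact: (s1 ltac:(clear -hs; lia) (conj erefl erefl))
                |exact: (s2 ltac:(clear -hs; lia) (conj erefl erefl))
                |exact: (s3 ltac:(clear -hs; lia) (conj erefl erefl))
                |exact: (s4 ltac:(clear -hs; lia) (conj erefl erefl))
                |exact: (s5 ltac:(clear -hs; lia) (conj erefl erefl))
                |exact: (s6 ltac:(clear -hs; lia) (conj erefl erefl))]].
Qed.

Definition PB (n x : int) := 0 < x /\ 2 * x < n /\ exists q, x = 2 * q + 1.

Lemma keyB (n x0 x1 x2 e0 e1 e2 : int) : (2 %| n)%Z ->
  PB n x0 -> PB n x1 -> PB n x2 ->
  epsok e0 -> epsok e1 -> epsok e2 -> ~ (e0 = 0 /\ e1 = 0 /\ e2 = 0) ->
  signok x0 x1 x2 e0 e1 e2 -> ~ (n %| e0 * x0 + e1 * x1 + e2 * x2)%Z.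
Proof.
move=> /dvdzP [c hc] [x0b [x0c [q0 hx0]]] [x1b [x1c [q1 hx1]]]
  [x2b [x2c [q2 hx2]]] he0 he1 he2 hnz [s1 [s2 [s3 [s4 [s5 s6]]]]] hdiv.
have n0 : 0 < n by clear -x0b x0c; lia.
have [t ht] : exists t, e0 + e1 + e2 = t * 2.
  move/dvdzP: hdiv => [m hm]; exists (m * c - (e0 * q0 + e1 * q1 + e2 * q2)).
  rewrite mulrBl -mulrA -hc -hm hx0 hx1 hx2; ring.
case: he0 => [?|[?|?]]; subst e0; case: he1 => [?|[?|?]]; subst e1; case: he2 => [?|[?|?]]; subst e2;
  first [ (clear -ht hnz; lia)
        | have hs := @zdv0 n _ n0 hdiv ltac:(clear -x0b x1b x2b x0c x1c x2c; lia);
          first [ (clear -hs x0b x1b x2b; lia)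
                |exact: (s1 ltac:(clear -hs; lia) (conj erefl erefl))
                |exact: (s2 ltac:(clear -hs; lia) (conj erefl erefl))
                |exact: (s3 ltac:(clear -hs; lia) (conj erefl erefl))
                |exact: (s4 ltac:(clear -hs; lia) (conj erefl erefl))
                |exact: (s5 ltac:(clear -hs; lia) (conj erefl erefl))
                |exact: (s6 ltac:(clear -hs; lia) (conj erefl erefl))]].
Qed.

Lemma sidon_of (n : nat) (S : seq int) (P : int -> Prop) :
 (forall x0 x1 x2 e0 e1 e2, P x0 -> P x1 -> P x2 -> epsok e0 -> epsok e1 -> epsok e2 ->
    ~ (e0 = 0 /\ e1 = 0 /\ e2 = 0) -> signok x0 x1 x2 e0 e1 e2 ->
    ~ (n%:Z %| e0 * x0 + e1 * x1 + e2 * x2)%Z) ->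
 (forall x, x \in S -> P x) -> sidon3 n S.
Proof.
move=> key hS x eps hx heps [i hi] hsg.
pose o0 : 'I_3 := @Ordinal 3 0 isT.
pose o1 : 'I_3 := @Ordinal 3 1 isT.
pose o2 : 'I_3 := @Ordinal 3 2 isT.
have -> : \sum_(i < 3) eps i * x i = eps o0 * x o0 + eps o1 * x o1 + eps o2 * x o2.
  rewrite !big_ord_recl big_ord0 addr0 addrA.
  by congr (_ * _ + _ * _ + _ * _); congr (_ _); apply/val_inj.
have eo : forall j, epsok (eps j).
  move=> j; move: (heps j); rewrite !inE => /or3P [/eqP|/eqP|/eqP] ->; rewrite /epsok; tauto.
apply: key; [exact: hS|exact: hS|exact: hS|exact: eo|exact: eo|exact: eo| |].
- move=> [h0 [h1 h2]]; move: hi.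
  have : i \in [:: o0; o1; o2] by case: i => [[|[|[|?]]] ?] //.
  by rewrite !inE => /or3P [/eqP|/eqP|/eqP] ->; rewrite ?h0 ?h1 ?h2 eqxx.
- by split; [exact: hsg|split; [exact: hsg|split; [exact: hsg|split; [exact: hsg|split; exact: hsg]]]].
Qed.

Lemma design_of (R : realType) (n d : nat) (S : seq int) :
  uniq S -> size S = (d.+1)./2 -> sidon3 n S ->
  exists X : 'M[R]_(d.+1, n), @regular_3design R n d X.
Proof. by move=> *; exists (Num.sqrt (2 / (d.+1)%:R) *: Amat R n d S), S. Qed.

Lemma half_odd (d : nat) : odd d -> (2 * (d.+1)./2 = d.+1)%N.
Proof. move=> od; have := odd_double_half d.+1; rewrite /= od /= add0n -mul2n; done. Qed.

Lemma caseB (R : realType) (d n : nat) : odd d -> ~~ odd n -> (2 * d + 2 <= n)%N ->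
  exists X : 'M[R]_(d.+1, n), @regular_3design R n d X.
Proof.
move=> od en hn; have he := @half_odd d od; set e := (d.+1)./2 in he *.
apply: (@design_of R n d [seq (2 * j + 1)%:Z | j <- iota 0 e]).
- rewrite map_inj_uniq ?iota_uniq // => a b h; lia.
- by rewrite size_map size_iota.
apply: (@sidon_of n _ (PB n)).
  move=> *; apply: keyB => //.
  by rewrite dvdzE /= dvdn2.
move=> x /mapP [j]; rewrite mem_iota => /andP [_ hj] ->.
rewrite /PB; split; first lia.
split; first lia.
by exists j%:Z; lia.
Qed.

Lemma Luniq (N p k : nat) : (2 * k + 1 < p)%N ->
  uniq [seq (j * p + r)%N | j <- iota 0 N, r <- iota k.+1 k.+1].
Proof.
move=> hkp; have p0 : (0 < p)%N by lia.
apply: allpairs_uniq; rewrite ?iota_uniq //.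
move=> u v hu hv.
case: (elimT allpairsP hu) => [[a r] [ha1 hr1 ->]].
case: (elimT allpairsP hv) => [[b r'] [hb1 hr1' ->]] /= h.
move: hr1 hr1'; rewrite !mem_iota /= => hr1 hr1'.
have hr : (r < p)%N by lia.
have hr' : (r' < p)%N by lia.
have := congr1 (divn^~ p) h; rewrite /= !divnMDl // (divn_small hr) (divn_small hr') !addn0 => ea.
by subst; congr pair; lia.
Qed.

Lemma caseA (R : realType) (d n p k : nat) : odd d -> (0 < n)%N -> (p %| n)%N ->
  (6 * k + 4 <= p)%N -> ((d.+1)./2 <= (n %/ p) * k.+1)%N ->
  exists X : 'M[R]_(d.+1, n), @regular_3design R n d X.
Proof.
move=> od n0 hpn hkp hle; set e := (d.+1)./2 in hle *.
have p0 : (0 < p)%N by lia.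
set L := [seq (j * p + r)%N | j <- iota 0 (n %/ p), r <- iota k.+1 k.+1].
have sL : size L = (n %/ p * k.+1)%N by rewrite size_allpairs !size_iota.
apply: (@design_of R n d (map Posz (take e L))).
- rewrite map_inj_uniq; last by move=> a b [].
  by apply: take_uniq; apply: Luniq; lia.
- by rewrite size_map size_takel // sL.
apply: (@sidon_of n _ (PA n p k)).
  by move=> *; apply: (@keyA n p k).
move=> x /mapP [y /mem_take /allpairsP [[j r] [hj hr ->]] ->].
move: hj hr; rewrite !mem_iota /= => hj hr.
have hjp : (j.+1 * p <= n %/ p * p)%N by rewrite leq_mul2r hj orbT.
rewrite divnK // in hjp.
rewrite /PA; split; first lia.
by exists j%:Z, r%:Z; lia.
Qed.

Theorem proposition5p3 (R : realType) (d n : nat) :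
  odd d ->
  ((((~~ odd n) /\ (2 * d + 2 <= n)%N)
    \/ (odd n /\ (3 * d + 2 <= n)%N)
    \/ (odd n /\ exists p : nat,
          [/\ (p %| n)%N, (p %% 6 = 5)%N & (p * (3 * d + 3) <= p.+1 * n)%N])) ->
   exists X : 'M[R]_(d.+1, n), @regular_3design R n d X)
  /\
  ((odd n /\ (5 %| n)%N /\ (5 * (d + 1) <= 2 * n)%N) ->
   exists X : 'M[R]_(d.+1, n), @regular_3design R n d X).
Proof.
move=> od.
have he := @half_odd d od.
set e := (d.+1)./2 in he.
have e0 : (0 < e)%N by lia.
have part1 : (((~~ odd n) /\ (2 * d + 2 <= n)%N)
    \/ (odd n /\ (3 * d + 2 <= n)%N)
    \/ (odd n /\ exists p : nat,
          [/\ (p %| n)%N, (p %% 6 = 5)%N & (p * (3 * d + 3) <= p.+1 * n)%N])) ->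
   exists X : 'M[R]_(d.+1, n), @regular_3design R n d X.
  case=> [[en hn] | [[on hn] | [on [p [hpn hp6 hpn2]]]]].
  - exact: caseB.
  - have n0 : (0 < n)%N by lia.
    apply: (@caseA R d n n e.-1) => //; first lia.
    by rewrite divnn n0 mul1n prednK.
  - have n0 : (0 < n)%N by case: n on {hpn hpn2}.
    have hp := divn_eq p 6; rewrite hp6 in hp.
    set k := (p %/ 6)%N in hp.
    have p0 : (0 < p)%N by lia.
    apply: (@caseA R d n p k) => //; first lia.
    have hq := divnK hpn; set q := (n %/ p)%N in hq *.
    have h6 : (p * (6 * e) <= p * (p.+1 * q))%N.
      have -> : (6 * e = 3 * d + 3)%N by lia.
      have -> : (p * (p.+1 * q) = p.+1 * n)%N by rewrite -hq mulnCA (mulnC q p).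
      exact: hpn2.
    rewrite leq_pmul2l // in h6.
    rewrite hp in h6.
    lia.
split => //.
move=> [on [h5 hd]]; apply: part1; right; right; split => //.
by exists 5%N; split => //; lia.
Qed.
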